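(* The Waterfilling Mechanism (with exact bucketing) described in the context satisfies Non-Interference: for every nonempty finite set $S$ of analysts, every analyst $j\notin S$ (all analysts $l$ having workload $W_l$, weight $s_l>0$ and strategy $A_l$ with $W_l=W_lA_l^+A_l$ and every column of $A_l$ of $L_1$ norm $1$), and every $i\in S$, $\mathrm{Err}_i(S\cup\{j\})\le \mathrm{Err}_i(S)$.
   Context: Data are a vector $x\in\mathbb{R}^n$. Fix $\varepsilon>0$. Each analyst $l$ has a workload matrix $W_l$, a weight $s_l>0$ (entitled to budget $s_l\varepsilon$), and a strategy matrix $A_l$ chosen for $W_l$ alone by a selection step, with $W_l = W_lA_l^+A_l$ ($^+$ the Moore–Penrose pseudo-inverse) and every column of $A_l$ of $L_1$ norm $1$. Fix a norm $\|\cdot\|$ on row vectors. Waterfilling Mechanism for a collective $S$: maintain buckets $B$ (unit vectors $e$ with weights $f_B(e)>0$), initially empty; for each $l\in S$ and each nonzero row $v$ of $s_lA_l$, set $e=v/\|v\|$; if $e\in B$ increase $f_B(e)$ by $\|v\|$, else add $e$ with $f_B(e)=\|v\|$. The joint strategy $A$ has rows $f_B(e)e$, $e\in B$. With $\varepsilon_S=(\sum_{l\in S}s_l)\varepsilon$, release $y=Ax+\eta$, $\eta$ i.i.d. Laplace of scale $\|A\|_1/\varepsilon_S$ ($\|A\|_1$ = maximum column $L_1$ norm). Analyst $i$ estimates $W_ix$ by $W_iA^+y$, with expected error $\mathrm{Err}_i(S)=\frac{2\|A\|_1^2}{\varepsilon_S^2}\|W_iA^+\|_F^2$. *)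

(* Defs.v *)
From mathcomp Require Import all_boot all_order all_algebra.
From mathcomp Require Import boolp reals.
Set Implicit Arguments. Unset Strict Implicit. Unset Printing Implicit Defensive.
Import Order.TTheory GRing.Theory Num.Theory.
Local Open Scope ring_scope.

Section Defs.
Variable R : realType.

Definition is_mp_pinv (p q : nat) (A : 'M[R]_(p, q)) (X : 'M[R]_(q, p)) : Prop :=
  [/\ A *m X *m A = A, X *m A *m X = X,
      (A *m X)^T = A *m X & (X *m A)^T = X *m A].

(* Moore-Penrose pseudo-inverse A^+ (it exists and is unique over the reals;
   the fallback 0 is never used). *)
Definition mp_pinv (p q : nat) (A : 'M[R]_(p, q)) : 'M[R]_(q, p) :=
  match pselect (exists X, is_mp_pinv A X) with
  | left h => projT1 (cid h)
  | right _ => 0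
  end.

Definition is_norm (n : nat) (N : 'rV[R]_n -> R) : Prop :=
  [/\ forall v, 0 <= N v,
      forall v, N v = 0 -> v = 0,
      forall (a : R) v, N (a *: v) = `|a| * N v
    & forall u v, N (u + v) <= N u + N v].

Definition mx_norm1 (p q : nat) (A : 'M[R]_(p, q)) : R :=
  \big[Num.max/0]_(c < q) \sum_(r < p) `|A r c|.

Definition frob2 (p q : nat) (M : 'M[R]_(p, q)) : R :=
  \sum_(r < p) \sum_(c < q) M r c ^+ 2.

Variable n : nat.
Variable N : 'rV[R]_n -> R.

(* Buckets: a list of (unit vector e, weight f_B(e)) with distinct e's. *)
Definition bucket_insert (B : seq ('rV[R]_n * R)) (v : 'rV[R]_n)
  : seq ('rV[R]_n * R) :=
  if v == 0 then B else
  let e := (N v)^-1 *: v in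
  if e \in unzip1 B then
    map (fun p => if p.1 == e then (p.1, p.2 + N v) else p) B
  else rcons B (e, N v).

Variables (I : finType) (k : I -> nat) (A : forall l, 'M[R]_(k l, n)) (s : I -> R).

Definition bucket_analyst (B : seq ('rV[R]_n * R)) (l : I) :=
  foldl (fun B' (r : 'I_(k l)) => bucket_insert B' (row r (s l *: A l)))
        B (enum 'I_(k l)).

Definition waterfill_buckets (S : {set I}) : seq ('rV[R]_n * R) :=
  foldl bucket_analyst [::] (enum S).

Definition joint_strategy (S : {set I}) :
  'M[R]_(size (waterfill_buckets S), n) :=
  \matrix_(i < size (waterfill_buckets S))
     let p := nth (0, 0) (waterfill_buckets S) i in p.2 *: p.1.

Variables (eps : R) (m : I -> nat) (W : forall l, 'M[R]_(m l, n)).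

Definition eps_of (S : {set I}) : R := (\sum_(l in S) s l) * eps.

Definition Err (S : {set I}) (i : I) : R :=
  2 * mx_norm1 (joint_strategy S) ^+ 2 / eps_of S ^+ 2
    * frob2 (W i *m mp_pinv (joint_strategy S)).

End Defs.

(* Main.v *)
Require Import Defs.
From mathcomp Require Import all_boot all_order all_algebra.
From mathcomp Require Import boolp reals.
From mathcomp Require Import ring lra.
Set Implicit Arguments. Unset Strict Implicit. Unset Printing Implicit Defensive.
Import Order.TTheory GRing.Theory Num.Theory.
Local Open Scope ring_scope.


Section MP.
Variable R : realType.

Lemma gram_unit (r q : nat) (F : 'M[R]_(r, q)) : row_free F -> (F *m F^T) \in unitmx.
Proof.
move=> fF; rewrite -row_free_unit -kermx_eq0; apply/eqP.
set K := kermx _.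
have KG : K *m (F *m F^T) = 0 by apply/sub_kermxP.
have KF : K *m F = 0.
  apply/matrixP => a c; rewrite mxE.
  have : ((K *m F) *m (K *m F)^T) a a = 0.
    by rewrite trmx_mul mulmxA -(mulmxA K) KG mul0mx mxE.
  rewrite mxE => /eqP; rewrite psumr_eq0 => [|b _]; last first.
    by rewrite !mxE -expr2 sqr_ge0.
  move=> /allP /(_ c (mem_index_enum c)) /implyP /(_ isT).
  by rewrite !mxE -expr2 sqrf_eq0 => /eqP.
by apply: (row_free_inj fF); rewrite KF mul0mx.
Qed.

Lemma mp_exists_fact (p q r : nat) (M : 'M[R]_(p, q)) (C : 'M[R]_(p, r)) (F : 'M[R]_(r, q)) :
  M = C *m F -> row_free F -> row_free C^T -> exists X, is_mp_pinv M X.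
Proof.
move=> eM fF fC.
have uG := gram_unit fF.
have uH := gram_unit fC. rewrite trmxK in uH.
set G := F *m F^T in uG *; set H := C^T *m C in uH *.
exists (F^T *m invmx G *m invmx H *m C^T).
have HGs : forall (t : nat) (Z : 'M[R]_t), Z^T = Z -> (invmx Z)^T = invmx Z.
  by move=> t Z eZ; rewrite trmx_inv eZ.
have Gs : G^T = G by rewrite /G trmx_mul trmxK.
have Hs : H^T = H by rewrite /H trmx_mul trmxK.
have gG : forall t (Y : 'M[R]_(t, r)), Y *m F *m F^T *m invmx G = Y.
  by move=> t Y; rewrite -!mulmxA (mulmxA F) mulmxV // mulmx1.
have hH : forall t (Y : 'M[R]_(t, r)), Y *m invmx H *m C^T *m C = Y.
  by move=> t Y; rewrite -!mulmxA -/H mulVmx // mulmx1.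
subst M; split; rewrite !mulmxA.
- by rewrite gG hH.
- by rewrite hH gG.
- rewrite gG !trmx_mul trmxK HGs // mulmxA //.
- rewrite hH !trmx_mul trmxK HGs // !mulmxA //.
Qed.

Lemma mp_exists (p q : nat) (M : 'M[R]_(p, q)) : exists X, is_mp_pinv M X.
Proof.
apply: (@mp_exists_fact _ _ _ M (col_base M) (row_base M)).
- by rewrite mulmx_base.
- exact: row_base_free.
- by rewrite /row_free mxrank_tr; apply: col_base_full.
Qed.

Lemma mp_pinvP (p q : nat) (M : 'M[R]_(p, q)) : is_mp_pinv M (mp_pinv M).
Proof.
rewrite /mp_pinv; case: pselect => [h|h]; first exact: (projT2 (cid h)).
by exfalso; apply: h; apply: mp_exists.
Qed.

End MP.

Section F.
Variable R : realType.
Lemma frob2_tr (p q : nat) (M : 'M[R]_(p, q)) : frob2 M = \tr (M *m M^T).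
Proof.
rewrite /frob2 /mxtrace; apply: eq_bigr => a _; rewrite mxE.
by apply: eq_bigr => c _; rewrite mxE expr2.
Qed.
Lemma frob2_ge0 (p q : nat) (M : 'M[R]_(p, q)) : 0 <= frob2 M.
Proof. by apply: sumr_ge0 => a _; apply: sumr_ge0 => c _; apply: sqr_ge0. Qed.

Lemma frob2_proj (t p q : nat) (M : 'M[R]_(p, q)) (P : 'M[R]_(q, p)) (X : 'M[R]_(t, p)) :
  is_mp_pinv M P -> frob2 (X *m M *m P) <= frob2 X.
Proof.
case=> h1 _ h3 _.
set Q := M *m P.
have QQ : Q *m Q = Q by rewrite /Q mulmxA h1.
have Qt : Q^T = Q by rewrite /Q h3.
rewrite -mulmxA -/Q; clearbody Q.
have e : frob2 X - frob2 (X *m Q) = frob2 (X *m (1%:M - Q)).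
  have T1 : (1%:M - Q)^T = 1%:M - Q by rewrite linearB /= trmx1 Qt.
  have T2 : (1%:M - Q) *m (1%:M - Q) = 1%:M - Q.
    by rewrite mulmxBl !mulmxBr !mul1mx mulmx1 QQ subrr subr0.
  rewrite !frob2_tr !trmx_mul Qt T1 !mulmxA -(mulmxA X Q Q) QQ.
  rewrite -(mulmxA X (1%:M - Q)) T2 mulmxBr mulmx1 mulmxBl.
  by rewrite linearB.
rewrite -subr_ge0 e; exact: frob2_ge0.
Qed.
End F.


Section Buckets.
Variables (R : realType) (n : nat) (N : 'rV[R]_n -> R).
Hypothesis hN : is_norm N.

Definition dir (v : 'rV[R]_n) := (N v)^-1 *: v.
Definition wt (B : seq ('rV[R]_n * R)) e := \sum_(p <- B | p.1 == e) p.2.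
Definition colsum (B : seq ('rV[R]_n * R)) c := \sum_(p <- B) p.2 * `|p.1 0 c|.
Definition Inv (B : seq ('rV[R]_n * R)) := uniq (unzip1 B) && all (fun p => 0 < p.2) B.

Lemma N_gt0 v : v != 0 -> 0 < N v.
Proof.
case: hN => h0 h1 _ _ nz; rewrite lt_def h0 andbT; apply/eqP => /h1 e.
by rewrite e eqxx in nz.
Qed.

Lemma sum_cst_seq (T : Type) (B : seq T) (P : pred T) (c : R) :
  \sum_(p <- B | P p) c = c *+ count P B.
Proof.
elim: B => [|x B IH]; first by rewrite big_nil.
by rewrite big_cons IH /=; case: (P x); rewrite ?mulrS ?add0n.
Qed.

Lemma count_key (B : seq ('rV[R]_n * R)) e :
  uniq (unzip1 B) -> e \in unzip1 B -> count (fun p => p.1 == e) B = 1%N.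
Proof.
move=> u ein.
have -> : count (fun p => p.1 == e) B = count_mem e (unzip1 B).
  by rewrite count_map; apply: eq_count => p /=; rewrite eq_sym.
by rewrite count_uniq_mem // ein.
Qed.

Lemma ins_inv B v : Inv B -> Inv (bucket_insert N B v).
Proof.
case/andP => u pos; rewrite /bucket_insert.
case: eqP => [//|/eqP nz]; first by rewrite /Inv u pos.
have Nv := N_gt0 nz.
case: ifP => ein.
- apply/andP; split.
  + rewrite /unzip1 -map_comp.
    have -> : [seq (fst \o (fun p => if p.1 == (N v)^-1 *: v then (p.1, p.2 + N v) else p)) i | i <- B] = unzip1 B.
      by apply: eq_map => p /=; case: ifP.
    exact: u.
  + apply/allP => p /mapP [q qB ->]; case: ifP => _ /=; move/allP: pos => /(_ q qB) //.
    by move=> h; apply: ltr_wpDr (ltW Nv) h.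
- apply/andP; split.
  + by rewrite /unzip1 map_rcons rcons_uniq ein u.
  + by rewrite all_rcons /= Nv pos.
Qed.

Lemma ins_wt B v e : Inv B ->
  wt (bucket_insert N B v) e = wt B e + (if (v != 0) && (dir v == e) then N v else 0).
Proof.
case/andP => u pos; rewrite /bucket_insert /wt /dir.
case: eqP => [_|/eqP nz] /=; first by rewrite addr0.
case: ifP => ein.
- rewrite big_map /= (eq_bigl (fun p => p.1 == e)); last by move=> p; case: ifP.
  case: eqP => [<-|/eqP ne].
  + rewrite (eq_bigr (fun p => p.2 + N v)); last by move=> p /eqP ->; rewrite eqxx.
    by rewrite big_split /= sum_cst_seq count_key // mulr1n.
  + rewrite addr0; apply: eq_bigr => p /eqP ->.
    by rewrite eq_sym (negbTE ne).
- by rewrite big_rcons /=.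
Qed.

Lemma ins_col B v c : Inv B ->
  colsum (bucket_insert N B v) c = colsum B c + `|v 0 c|.
Proof.
case/andP => u pos; rewrite /bucket_insert /colsum.
case: eqP => [->|/eqP nz] /=; first by rewrite mxE normr0 addr0.
have Nv := N_gt0 nz.
have key : N v * `|((N v)^-1 *: v) 0 c| = `|v 0 c|.
  by rewrite mxE normrM ger0_norm ?invr_ge0 ?(ltW Nv) // mulrA mulfV ?mul1r // gt_eqF.
case: ifP => ein.
- rewrite big_map /=.
  rewrite (eq_bigr (fun p : 'rV[R]_n * R => p.2 * `|p.1 0 c| + (if p.1 == (N v)^-1 *: v then N v * `|((N v)^-1 *: v) 0 c| else 0))); last first.
    by move=> p _; case: ifP => [/eqP ->|] /=; rewrite ?addr0 // mulrDl.
  rewrite big_split /= -big_mkcond /= sum_cst_seq count_key // mulr1n key //.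
- by rewrite -cats1 big_cat big_seq1 /= key.
Qed.

End Buckets.


Section Fold.
Variables (R : realType) (n : nat) (N : 'rV[R]_n -> R).
Hypothesis hN : is_norm N.

Lemma fold_ins (T : Type) (g : T -> 'rV[R]_n) rs B : Inv B ->
  let B' := foldl (fun B' r => bucket_insert N B' (g r)) B rs in
  [/\ Inv B',
      (forall e, wt B' e = wt B e + \sum_(r <- rs | (g r != 0) && (dir N (g r) == e)) N (g r)) &
      (forall c, colsum B' c = colsum B c + \sum_(r <- rs) `|g r 0 c|)].
Proof.
elim: rs B => [|r rs IH] B iB /=.
  by split => // [e|c]; rewrite big_nil addr0.
have iB1 : Inv (bucket_insert N B (g r)) by apply: ins_inv.
case: (IH _ iB1) => i1 w1 c1; split => // [e|c].
  by rewrite w1 ins_wt // big_cons -addrA; congr (_ + _); case: ifP; rewrite ?add0r.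
by rewrite c1 ins_col // big_cons addrA.
Qed.

Variables (I : finType) (k : I -> nat) (A : forall l, 'M[R]_(k l, n)) (s : I -> R).

Definition vr l (r : 'I_(k l)) := row r (s l *: A l).

Lemma fold_an (ls : seq I) B : Inv B ->
  let B' := foldl (bucket_analyst N A s) B ls in
  [/\ Inv B',
      (forall e, wt B' e = wt B e + \sum_(l <- ls) \sum_(r < k l | (vr r != 0) && (dir N (vr r) == e)) N (vr r)) &
      (forall c, colsum B' c = colsum B c + \sum_(l <- ls) \sum_(r < k l) `|vr r 0 c|)].
Proof.
elim: ls B => [|l ls IH] B iB /=.
  by split => // [e|c]; rewrite big_nil addr0.
case: (@fold_ins _ (@vr l) (enum 'I_(k l)) B iB) => i0 w0 c0.
case: (IH _ i0) => i1 w1 c1; split => // [e|c].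
  rewrite w1 /bucket_analyst w0 big_cons addrA; congr (_ + _ + _).
  by rewrite big_enum_cond /=; apply: eq_bigl => r.
rewrite c1 /bucket_analyst c0 big_cons addrA; congr (_ + _ + _).
by rewrite big_enum.
Qed.

Definition WT (T : {set I}) e :=
  \sum_(l in T) \sum_(r < k l | (vr r != 0) && (dir N (vr r) == e)) N (vr r).

Lemma wf_prop (T : {set I}) :
  [/\ Inv (waterfill_buckets N A s T),
      (forall e, wt (waterfill_buckets N A s T) e = WT T e) &
      (forall c, colsum (waterfill_buckets N A s T) c = \sum_(l in T) \sum_(r < k l) `|vr r 0 c|)].
Proof.
have i0 : Inv (@nil ('rV[R]_n * R)) by [].
case: (@fold_an (enum T) _ i0) => i1 w1 c1; split => // [e|c].
  by rewrite /waterfill_buckets w1 /wt big_nil add0r /WT big_enum.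
by rewrite /waterfill_buckets c1 /colsum big_nil add0r big_enum.
Qed.

End Fold.


Section Mx.
Variables (R : realType) (n : nat) (N : 'rV[R]_n -> R).
Hypothesis hN : is_norm N.
Local Notation bl := (seq ('rV[R]_n * R)).

Definition jmx (B : seq ('rV[R]_n * R)) : 'M[R]_(size B, n) :=
  \matrix_(i < size B) let p := nth (0, 0) B i in p.2 *: p.1.
Definition key (B : seq ('rV[R]_n * R)) (b : 'I_(size B)) := (nth (0, 0) B b).1.
Definition wb (B : seq ('rV[R]_n * R)) (b : 'I_(size B)) := (nth (0, 0) B b).2.

Lemma jmxE (B : bl) b c : jmx B b c = wb b * key b 0 c.
Proof. by rewrite /jmx !mxE. Qed.

Lemma wb_gt0 (B : bl) (b : 'I_(size B)) : Inv B -> 0 < wb b.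
Proof. by case/andP => _ /allP; apply; rewrite mem_nth. Qed.

Lemma wt_mem (B : bl) p : uniq (unzip1 B) -> p \in B -> wt B p.1 = p.2.
Proof.
elim: B => [//|q B IH] /= /andP [qn u]; rewrite inE /wt big_cons.
case/orP => [/eqP ->|pB].
  rewrite eqxx big1_seq ?addr0 // => x /andP [/eqP ex xB].
  by move: qn; rewrite -ex; move/negP; case; apply: map_f.
have -> : (q.1 == p.1) = false.
  by apply/negbTE; apply: contra qn => /eqP ->; apply: map_f.
exact: IH.
Qed.

Lemma key_nth (B : bl) (b : 'I_(size B)) : key b = nth 0 (unzip1 B) b.
Proof. by rewrite /key (nth_map (0, 0)). Qed.

Lemma key_mem (B : bl) (b : 'I_(size B)) : key b \in unzip1 B.
Proof. by rewrite key_nth mem_nth // size_map. Qed.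

Lemma wt_key (B : bl) (b : 'I_(size B)) : Inv B -> wt B (key b) = wb b.
Proof. by case/andP => u _; apply: wt_mem => //; rewrite mem_nth. Qed.

Lemma key_in (B : bl) e : Inv B -> (e \in unzip1 B) = (0 < wt B e).
Proof.
move=> iB; case/andP: (iB) => u pos.
apply/idP/idP.
  by case/mapP => p pB ->; rewrite wt_mem //; move/allP: pos; apply.
apply: contraLR => ne; rewrite /wt big1_seq ?ltxx // => p /andP [/eqP ep pB].
by move: ne; rewrite -ep map_f.
Qed.

Lemma key_sum1 (B : bl) e : Inv B -> e \in unzip1 B ->
  exists b0 : 'I_(size B), key b0 = e /\
    forall F : 'I_(size B) -> R, \sum_(b | key b == e) F b = F b0.
Proof.
case/andP => u _ ein.
have lt : (index e (unzip1 B) < size B)%N by rewrite -(size_map fst) index_mem.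
exists (Ordinal lt); split; first by rewrite key_nth /= nth_index.
move=> F; apply: big_pred1 => b /=; apply/eqP/eqP => [|->].
  rewrite key_nth => eb; apply: val_inj => /=.
  apply/eqP; rewrite -(nth_uniq 0 _ _ u) ?size_map //= nth_index // eb //.
by rewrite key_nth /= nth_index.
Qed.

Lemma key_sum0 (B : bl) e : e \notin unzip1 B ->
  forall F : 'I_(size B) -> R, \sum_(b | key b == e) F b = 0.
Proof.
move=> en F; rewrite big_pred0 // => b; apply/negbTE; apply: contra en => /eqP <-.
exact: key_mem.
Qed.

Lemma jmx_col (B : bl) c : Inv B -> \sum_b `|jmx B b c| = colsum B c.
Proof.
move=> iB; rewrite /colsum (big_nth (0, 0)) big_mkord; apply: eq_bigr => b _.
by rewrite jmxE normrM gtr0_norm ?wb_gt0.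
Qed.

Lemma transfer (B B' : bl) q (X : 'M[R]_(q, size B)) : Inv B -> Inv B' ->
  (forall e, wt B e <= wt B' e) ->
  exists X' : 'M[R]_(q, size B'), X' *m jmx B' = X *m jmx B /\ frob2 X' <= frob2 X.
Proof.
move=> iB iB' le.
have inB' : forall b : 'I_(size B), key b \in unzip1 B'.
  move=> b; rewrite key_in // (lt_le_trans _ (le _)) // wt_key // wb_gt0 //.
exists (\matrix_(a, b') \sum_(b | key b == key b') X a b * (wb b / wb b')).
split.
  apply/matrixP => a c; rewrite !mxE.
  have -> : \sum_b' (\matrix_(a, b') \sum_(b | key b == key b') X a b * (wb b / wb b')) a b' * jmx B' b' c
     = \sum_(b' : 'I_(size B')) \sum_(b : 'I_(size B) | key b == key b') X a b * jmx B b c.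
    apply: eq_bigr => b' _; rewrite mxE mulr_suml; apply: eq_bigr => b /eqP eb.
    rewrite !jmxE eb -!mulrA; congr (_ * _); rewrite (mulrA (wb b')^-1) mulVf ?mul1r //.
    by rewrite gt_eqF // wb_gt0.
  rewrite (exchange_big_dep xpredT) //=; apply: eq_bigr => b _.
  rewrite (eq_bigl (fun i => key i == key b)); last by move=> i; rewrite eq_sym.
  by have [b0 [_ ->]] := key_sum1 iB' (inB' b).
rewrite /frob2; apply: ler_sum => a _.
apply: (le_trans (y := \sum_(b' : 'I_(size B')) \sum_(b | key b == key b') X a b ^+ 2)).
  apply: ler_sum => b' _; rewrite mxE.
  case: (boolP (key b' \in unzip1 B)) => kin; last by rewrite !key_sum0 // expr2 mulr0.
  have [b0 [kb0 hs]] := key_sum1 iB kin; rewrite !hs.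
  have w0 := wb_gt0 b0 iB; have w1 := wb_gt0 b' iB'.
  have r0 : 0 <= wb b0 / wb b' by rewrite divr_ge0 // ltW.
  have r1 : wb b0 / wb b' <= 1.
    rewrite ler_pdivrMr // mul1r -(wt_key b0 iB) -(wt_key b' iB') -kb0; exact: le.
  rewrite exprMn ler_piMr ?sqr_ge0 // expr_le1 //.
rewrite (exchange_big_dep xpredT) //=; apply: ler_sum => b _.
rewrite (eq_bigl (fun i => key i == key b)); last by move=> i; rewrite eq_sym.
by have [b0 [_ ->]] := key_sum1 iB' (inB' b).
Qed.

Lemma N0 : N 0 = 0.
Proof. by case: hN => _ _ hs _; rewrite -(scale0r (0 : 'rV[R]_n)) hs normr0 mul0r. Qed.

Lemma rowspace (B : bl) q (V : 'M[R]_(q, n)) : Inv B ->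
  (forall r, row r V != 0 -> 0 < wt B (dir N (row r V))) ->
  exists Y : 'M[R]_(q, size B), V = Y *m jmx B.
Proof.
move=> iB hV.
exists (\matrix_(r, b) if key b == dir N (row r V) then N (row r V) / wb b else 0).
apply/matrixP => r c; rewrite !mxE.
rewrite (eq_bigr (fun b => if key b == dir N (row r V) then N (row r V) / wb b * jmx B b c else 0)); last first.
  by move=> b _; rewrite mxE; case: ifP => //; rewrite mul0r.
rewrite -big_mkcond /=.
have eV : V r c = row r V 0 c by rewrite mxE.
case: (eqVneq (row r V) 0) => [v0|nz].
  by rewrite big1 ?eV ?v0 ?mxE // => b _; rewrite ?v0 N0 !mul0r.
have kin : dir N (row r V) \in unzip1 B by rewrite key_in // hV.
have [b0 [kb0 ->]] := key_sum1 iB kin.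
have w0 := wb_gt0 b0 iB.
have Nv : 0 < N (row r V) by apply: N_gt0.
rewrite jmxE kb0 /dir mxE eV mulrA -(mulrA _ _ (wb b0)) mulVf ?gt_eqF // mulr1.
by rewrite mulrA mulfV ?gt_eqF // mul1r.
Qed.

End Mx.


Lemma bigmax_cst (R : realType) (n : nat) (K : R) : 0 <= K ->
  \big[Num.max/0]_(c < n) K = if n == 0%N then 0 else K.
Proof.
move=> K0; rewrite big_const_ord; elim: n => [//|n' IH].
rewrite iterS IH; case: (n' == 0%N); first by rewrite max_l.
by rewrite maxxx.
Qed.

Lemma pref_eq (R : realType) (n : nat) (N : 'rV[R]_n -> R)
  (I : finType) (k : I -> nat) (A : forall l, 'M[R]_(k l, n))
  (s : I -> R) (eps : R) (T : {set I}) :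
  is_norm N -> 0 < eps -> (forall l, 0 < s l) ->
  (forall l (c : 'I_n), \sum_(r < k l) `|A l r c| = 1) -> T != set0 ->
  2 * mx_norm1 (joint_strategy N A s T) ^+ 2 / eps_of s eps T ^+ 2
  = if n == 0%N then 0 else 2 / eps ^+ 2.
Proof.
move=> hN he hs hA /set0Pn [x xT].
have sg : 0 < \sum_(l in T) s l.
  rewrite (bigD1 x) //= ltr_wpDr //; first by apply: sumr_ge0 => l _; apply: ltW.
have [iB _ cB] := wf_prop hN A s T.
have -> : mx_norm1 (joint_strategy N A s T) = \big[Num.max/0]_(c < n) \sum_(l in T) s l.
  rewrite /mx_norm1; apply: eq_bigr => c _.
  rewrite (jmx_col (B := waterfill_buckets N A s T)) // cB; apply: eq_bigr => l _.
  rewrite (eq_bigr (fun r => s l * `|A l r c|)); last first.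
    by move=> r _; rewrite /vr !mxE normrM gtr0_norm.
  by rewrite -big_distrr /= hA mulr1.
rewrite bigmax_cst ?ltW //; case: (n == 0%N); first by rewrite expr0n /= mulr0 mul0r.
rewrite /eps_of; field.
by rewrite gt_eqF // gt_eqF.
Qed.

Unset Implicit Arguments.

Theorem mainTheorem3 (R : realType) (n : nat) (N : 'rV[R]_n -> R)
  (I : finType) (m k : I -> nat)
  (W : forall l, 'M[R]_(m l, n)) (A : forall l, 'M[R]_(k l, n))
  (s : I -> R) (eps : R) :
  is_norm N ->
  0 < eps ->
  (forall l, 0 < s l) ->
  (forall l, W l = W l *m mp_pinv (A l) *m A l) ->
  (forall l (c : 'I_n), \sum_(r < k l) `|A l r c| = 1) ->
  forall (S : {set I}) (j i : I),
    S != set0 -> j \notin S -> i \in S ->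
    Err N A s eps W (j |: S) i <= Err N A s eps W S i.
Proof.
move=> hN he hs hW hA S j i Sn jS iS.
have S'n : j |: S != set0 by apply/set0Pn; exists j; rewrite setU11.
rewrite /Err (pref_eq hN he hs hA Sn) (pref_eq hN he hs hA S'n).
apply: ler_wpM2l; first by case: (n == 0%N); rewrite // divr_ge0 // sqr_ge0.
set B := waterfill_buckets N A s S; set B' := waterfill_buckets N A s (j |: S).
have [iB wB _] := wf_prop hN A s S.
have [iB' wB' _] := wf_prop hN A s (j |: S).
change (joint_strategy N A s (j |: S)) with (jmx B').
change (joint_strategy N A s S) with (jmx B).
have Nge0 : forall v, 0 <= N v by case: hN.
have le : forall e, wt B e <= wt B' e.
  move=> e; rewrite wB wB' /WT big_setU1 //= ler_wpDl //.
  by apply: sumr_ge0 => r _; apply: Nge0.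
have hV : forall r, row r (s i *: A i) != 0 -> 0 < wt B (dir N (row r (s i *: A i))).
  move=> r nz; rewrite wB /WT (bigD1 i) //= ltr_wpDr //.
    by apply: sumr_ge0 => l _; apply: sumr_ge0 => r' _; apply: Nge0.
  rewrite (bigD1 r) /= ?nz ?eqxx //= ltr_wpDr ?N_gt0 //.
  by apply: sumr_ge0 => r' _; apply: Nge0.
have [Y eY] := rowspace hN iB hV.
set Z := W i *m mp_pinv (A i) *m ((s i)^-1 *: Y).
have eW : W i = Z *m jmx B.
  rewrite {1}hW /Z -!mulmxA -scalemxAl -eY scalerA mulVf ?gt_eqF // scale1r //.
set X0 := W i *m mp_pinv (jmx B).
have eX0 : X0 *m jmx B = W i.
  have [h1 _ _ _] := mp_pinvP (jmx B).
  by rewrite /X0 {1}eW -!mulmxA (mulmxA (jmx B)) h1 !mulmxA -/Z -eW.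
have [X' [eX' fX']] := transfer X0 iB iB' le.
apply: le_trans fX'.
rewrite -eX0 -eX'; apply: frob2_proj; exact: mp_pinvP.
Qed.
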